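(* For any integers $n\ge1$ and $m\ge1$ there exist instances of the dynamic model in the context with $|\mathcal U_0|\ge n$ and $|\mathcal C_0|\ge m$ such that $\mathrm{LTE}(\mathbf{FL})>0$ and $$\frac{\mathrm{LTE}(\mathbf{UC})}{\mathrm{LTE}(\mathbf{FL})}=0.$$
   Context: An instance consists of a dimension $D$, users $\mathcal U_0=\{1,\dots,U\}$ with types $u_i\in\mathbb R^D_{\ge0}$, creators $\mathcal C_0=\{1,\dots,C\}$ with types $c_j\in\mathbb R^D_{\ge 0}$, all of Euclidean norm $1$, a positive integer $K$, a creator threshold $\bar a\in\mathbb N_0$ and a user threshold $\bar e\in[0,1]$. Time $t=0,1,2,\dots$; at time $t$ the platform has sets $\mathcal U_t\subseteq\mathcal U_0$, $\mathcal C_t\subseteq\mathcal C_0$ and chooses a recommendation $R_t$ assigning each $i\in\mathcal U_t$ a set $R_t(i)\subseteq\mathcal C_t$ of size $K$ (of smaller size only if necessary, e.g. $|\mathcal C_t|<K$). Engagement is $E(\mathcal U,\mathcal C,R)=\sum_{i\in\mathcal U}\sum_{j\in R(i)}u_i^Tc_j$. Then $\mathcal U_{t+1}=\{i\in\mathcal U_t:|R_t(i)|=K,\ u_i^Tc_j\ge\bar e\ \forall j\in R_t(i)\}$ and $\mathcal C_{t+1}=\{j\in\mathcal C_t:|\{i\in\mathcal U_t:j\in R_t(i)\}|\ge\bar a\}$. For a sequence $\mathbf R=(R_0,R_1,\dots)$, $\mathrm{LTE}(\mathbf R)=\lim_{T\to\infty}\frac1T\sum_{t=0}^{T-1}E(\mathcal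 U_t,\mathcal C_t,R_t)$. $\mathbf{FL}$ denotes any sequence maximizing $\mathrm{LTE}$. $\mathbf{UC}$ is the user-centric sequence with $UC_t(i)\in\arg\max_{S\subseteq\mathcal C_t,|S|\le K}\sum_{j\in S}u_i^Tc_j$ for all $t$ and $i\in\mathcal U_t$ (each user gets her $K$ highest-engagement remaining creators, or all remaining creators if fewer than $K$). *)

(* Defs.v *)
From HB Require Import structures.
From mathcomp Require Import all_boot all_order all_algebra.
From mathcomp Require Import all_classical all_reals all_analysis.
Set Implicit Arguments. Unset Strict Implicit. Unset Printing Implicit Defensive.
Import Order.TTheory GRing.Theory Num.Theory.
Import numFieldNormedType.Exports.
Local Open Scope ring_scope.

Section Model.
Variable R : realType.
Variables D U C : nat.
Variable u : 'I_U -> 'I_D -> R.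
Variable c : 'I_C -> 'I_D -> R.
Variable K abar : nat.
Variable ebar : R.

Definition valid_instance : Prop :=
  [/\ (forall i k, 0 <= u i k), (forall j k, 0 <= c j k),
      (forall i, \sum_(k < D) u i k ^+ 2 = 1),
      (forall j, \sum_(k < D) c j k ^+ 2 = 1) &
      (0 < K)%N /\ 0 <= ebar <= 1].

Definition eng (i : 'I_U) (j : 'I_C) : R := \sum_(k < D) u i k * c j k.

Definition recommendation := 'I_U -> {set 'I_C}.
Definition recseq := nat -> recommendation.

Definition state := ({set 'I_U} * {set 'I_C})%type.

Definition step (s : state) (Rt : recommendation) : state :=
  ([set i in s.1 | (#|Rt i| == K) && [forall j in Rt i, ebar <= eng i j]],
   [set j in s.2 | (abar <= #|[set i in s.1 | j \in Rt i]|)%N]).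

Fixpoint traj (Rs : recseq) (t : nat) : state :=
  match t with
  | 0 => ([set: 'I_U]%SET, [set: 'I_C]%SET)
  | t'.+1 => step (traj Rs t') (Rs t')
  end.

Definition Us (Rs : recseq) t := (traj Rs t).1.
Definition Cs (Rs : recseq) t := (traj Rs t).2.

Definition engagement (Uset : {set 'I_U}) (Rt : recommendation) : R :=
  \sum_(i in Uset) \sum_(j in Rt i) eng i j.

(* feasibility: every active user gets a subset of the active creators of size K,
   smaller only if necessary, i.e. of size min(K, |C_t|) *)
Definition feasible (Rs : recseq) : Prop :=
  forall t i, i \in Us Rs t ->
    Rs t i \subset Cs Rs t /\ #|Rs t i| = minn K #|Cs Rs t|.

Definition is_LTE (Rs : recseq) (L : R) : Prop :=
  ((fun T : nat => (T%:R)^-1 * \sum_(t < T) engagement (Us Rs t) (Rs t)) @ \oo --> L)%classic.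

Definition is_FL (Rs : recseq) (L : R) : Prop :=
  [/\ feasible Rs, is_LTE Rs L &
      forall Rs' L', feasible Rs' -> is_LTE Rs' L' -> L' <= L].

Definition is_UC (Rs : recseq) : Prop :=
  feasible Rs /\
  forall t i, i \in Us Rs t ->
    forall S : {set 'I_C}, S \subset Cs Rs t -> (#|S| <= K)%N ->
      \sum_(j in S) eng i j <= \sum_(j in Rs t i) eng i j.

End Model.

(* Main.v *)
Require Import Defs.
From HB Require Import structures.
From mathcomp Require Import all_boot all_order all_algebra.
From mathcomp Require Import all_classical all_reals all_analysis.
From mathcomp Require Import ring lra zify.
Import Order.TTheory GRing.Theory Num.Theory.
Import numFieldNormedType.Exports.
Local Open Scope ring_scope.

Section Inst.
Variable R : realType.
Variables n m : nat.
Hypothesis n0 : (0 < n)%N.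
Hypothesis m0 : (0 < m)%N.

Definition uI (i : 'I_n.+1) (k : 'I_n.+2) : R :=
  if (k : nat) == i then 4/5 else if (k : nat) == n.+1 then 3/5 else 0.
Definition cI (j : 'I_(n.+1 + m)) (k : 'I_n.+2) : R :=
  if (k : nat) == minn j n.+1 then 1 else 0.
Definition ebI : R := 1/2.

Lemma sum_single N (F : 'I_N -> R) (a : 'I_N) :
  (forall k, k != a -> F k = 0) -> \sum_(k < N) F k = F a.
Proof. by move=> H; rewrite (bigD1 a) //= big1 ?addr0. Qed.

Lemma engE i j : eng uI cI i j =
  if (j : nat) == i then 4/5 else if (n.+1 <= j)%N then 3/5 else 0.
Proof.
have hf : (minn j n.+1 < n.+2)%N by rewrite ltnS geq_minr.
rewrite /eng (@sum_single n.+2 _ (Ordinal hf)); last first.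
  move=> k hk; rewrite /cI ifF ?mulr0 //; apply/negP => /eqP hk'.
  by move/eqP: hk; apply; apply: val_inj.
rewrite /cI /uI /= eqxx mulr1.
case: (leqP n.+1 j) => hj.
  have hi := ltn_ord i.
  rewrite ifF; last by apply/negbTE; rewrite neq_ltn hi orbT.
  rewrite eqxx ifF //; apply/negbTE; rewrite neq_ltn; apply/orP; right.
  exact: (leq_trans hi).
by case: eqP => // _; rewrite ifF //; apply/negbTE; rewrite neq_ltn hj.
Qed.

Lemma valid : valid_instance uI cI 1 ebI.
Proof.
split.
- by move=> i k; rewrite /uI; repeat case: ifP => _ //.
- by move=> j k; rewrite /cI; case: ifP.
- move=> i.
  have hi : (i < n.+2)%N by apply: (leq_trans (ltn_ord i)).
  have hl : (n.+1 < n.+2)%N by [].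
  rewrite (bigD1 (Ordinal hi)) //= (bigD1 (Ordinal hl)) /=; last first.
    by rewrite -val_eqE /= neq_ltn ltn_ord orbT.
  rewrite big1 ?addr0.
    rewrite /uI /= eqxx ifF; last by apply/negbTE; rewrite neq_ltn ltn_ord orbT.
    rewrite eqxx; lra.
  move=> k /andP [hk1 hk2]; rewrite /uI.
  rewrite ifF; last by apply/negbTE; move: hk1; rewrite -val_eqE.
  by rewrite ifF ?expr0n //; apply/negbTE; move: hk2; rewrite -val_eqE.
- move=> j.
  have hf : (minn j n.+1 < n.+2)%N by rewrite ltnS geq_minr.
  rewrite (@sum_single n.+2 _ (Ordinal hf)); last first.
    move=> k hk; rewrite /cI ifF ?expr0n //; apply/negP => /eqP hk'.
    by move/eqP: hk; apply; apply: val_inj.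
  by rewrite /cI /= eqxx expr1n.
- split => //; rewrite /ebI; lra.
Qed.

Notation Us' := (Us uI cI 1 n.+1 ebI).
Notation Cs' := (Cs uI cI 1 n.+1 ebI).
Notation feas := (feasible uI cI 1 n.+1 ebI).
Notation E Rs t := (engagement uI cI (Us' Rs t) (Rs t)).

Lemma Us_step Rs t i : (i \in Us' Rs t.+1) =
  [&& i \in Us' Rs t, #|Rs t i| == 1%N & [forall j in Rs t i, ebI <= eng uI cI i j]].
Proof. by rewrite /Us /= inE. Qed.

Lemma Cs_step Rs t j : (j \in Cs' Rs t.+1) =
  (j \in Cs' Rs t) && (n.+1 <= #|[set i in Us' Rs t | j \in Rs t i]|)%N.
Proof. by rewrite /Cs /= inE. Qed.

Lemma creator_all Rs t j : j \in Cs' Rs t.+1 ->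
  forall i, i \in Us' Rs t /\ j \in Rs t i.
Proof.
rewrite Cs_step => /andP[_ h] i.
set A := [set i in Us' Rs t | j \in Rs t i] in h.
have /eqP hA : A == [set: 'I_n.+1]%SET by rewrite eqEcard finset.subsetT cardsT card_ord.
have : i \in A by rewrite hA inE.
by rewrite inE => /andP[].
Qed.

Arguments creator_all [Rs t j].

Lemma Cs_sub Rs t : Cs' Rs t.+1 \subset Cs' Rs t.
Proof. by apply/fintype.subsetP => j; rewrite Cs_step => /andP[]. Qed.

Lemma Cs_empty_after Rs t t' : Cs' Rs t = finset.set0 -> (t <= t')%N -> Cs' Rs t' = finset.set0.
Proof.
move=> h0 htt; rewrite -(subnKC htt); elim: (t' - t)%N => [|d IH]; first by rewrite addn0.
by apply/eqP; rewrite -finset.subset0 -IH addnS Cs_sub.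
Qed.

Arguments Cs_empty_after [Rs t t'].

Lemma E_empty Rs t : feas Rs -> Cs' Rs t = finset.set0 -> E Rs t = 0.
Proof.
move=> hf hC; rewrite /engagement big1 // => i hi.
have [hs _] := hf t i hi; move: hs; rewrite hC finset.subset0 => /eqP ->.
by rewrite big_set0.
Qed.

Lemma eng_ge0 i j : 0 <= eng uI cI i j.
Proof. by rewrite engE; repeat case: ifP => _ //; lra. Qed.

Lemma E_bound Rs t (b : R) : feas Rs -> 0 <= b ->
  (forall i j, i \in Us' Rs t -> j \in Rs t i -> eng uI cI i j <= b) ->
  E Rs t <= n.+1%:R * b.
Proof.
move=> hf hb hij; rewrite /engagement.
apply: (@le_trans _ _ (\sum_(i in Us' Rs t) b)).
  apply: ler_sum => i hi.
  apply: (@le_trans _ _ (\sum_(j in Rs t i) b)).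
    by apply: ler_sum => j hj; apply: hij.
  rewrite sumr_const -[b *+ _]mulr_natl -[X in _ <= X]mul1r ler_wpM2r //.
  have [_ ->] := hf t i hi.
  by rewrite lern1 geq_minl. 
rewrite sumr_const -[b *+ _]mulr_natl ler_wpM2r // ler_nat.
by apply: (leq_trans (max_card _)); rewrite card_ord.
Qed.

Lemma E_bound45 Rs t : feas Rs -> E Rs t <= n.+1%:R * (4/5).
Proof.
move=> hf; apply: E_bound => //.

by move=> i j _ _; rewrite engE; repeat case: ifP => _ //; lra.
Qed.

Lemma good_step Rs t : feas Rs -> (forall j, j \in Cs' Rs t -> (n.+1 <= j)%N) ->
  E Rs t <= n.+1%:R * (3/5).
Proof.
move=> hf hg; apply: E_bound => //.
move=> i j hi hj.
have [hs _] := hf t i hi.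
have hjg := hg j (fintype.subsetP hs j hj).
rewrite engE hjg ifF //.
by apply/negbTE; rewrite neq_ltn; apply/orP; right; apply: (leq_trans (ltn_ord i)).
Qed.

Lemma bad_kills Rs t (j : 'I_(n.+1 + m)) : j \in Cs' Rs t.+1 -> (j < n.+1)%N ->
  Cs' Rs t.+2 = finset.set0.
Proof.
move=> hj hjl.
have [i' hi'] : exists i' : 'I_n.+1, (j : nat) != i'.
  case: (eqVneq (j : nat) 0%N) => hj0.
    by exists (Ordinal (n0 : (1 < n.+1)%N)); rewrite hj0.
  by exists ord0.
apply/finset.setP => j'; rewrite finset.in_set0; apply/negP => hj'.
have [hU _] := creator_all hj' i'.
move: hU; rewrite Us_step => /and3P[_ _ /forallP /(_ j)].
have [_ ->] := creator_all hj i'.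
rewrite /= engE (negbTE hi') leqNgt hjl /ebI /=; lra.
Qed.

Arguments bad_kills [Rs t j].

Arguments E_bound45 [Rs]. Arguments E_empty [Rs t].

Definition bad Rs t := (0 < t)%N && [exists j : 'I_(n.+1 + m), (j \in Cs' Rs t) && (j < n.+1)%N].

Lemma exc Rs : feas Rs -> exists t1, forall t, t != 0%N -> t != t1 ->
  E Rs t <= n.+1%:R * (3/5).
Proof.
move=> hf.
case: (pselect (exists t, bad Rs t)) => [hex|hno].
  case: (ex_minnP hex) => t1 hb hmin; exists t1 => t t0 tt1.
  case: (ltngtP t t1) => [lt|gt|eq]; last by rewrite eq eqxx in tt1.
    apply: good_step => // j hj; rewrite leqNgt; apply/negP => hjl.
    have : bad Rs t by rewrite /bad lt0n t0 /=; apply/existsP; exists j; rewrite hj hjl.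
    by move/hmin; rewrite leqNgt lt.
  move: hb; rewrite /bad => /andP[]; case: t1 gt {hmin tt1} => // s gt _ /existsP[j /andP[hj hjl]].
  by rewrite E_empty // (Cs_empty_after (bad_kills hj hjl)).
exists 0%N => t t0 _; apply: good_step => // j hj; rewrite leqNgt; apply/negP => hjl.
by apply: hno; exists t; rewrite /bad lt0n t0 /=; apply/existsP; exists j; rewrite hj hjl.
Qed.

Arguments exc [Rs].

Lemma sum_exc (f : nat -> R) (B M : R) (a b : nat) : 0 <= M ->
  (forall t, f t <= B + M) -> (forall t, t != a -> t != b -> f t <= B) ->
  forall T, \sum_(t < T) f t <= T%:R * B + ((a < T)%N + (b < T)%N)%:R * M.
Proof.
move=> hM hall hex; elim=> [|T IH].
  by rewrite big_ord0 /= mul0r mul0r addr0.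
rewrite big_ord_recr /=.
have ha : ((a < T.+1)%N : nat) = ((a < T)%N + (a == T))%N.
  by rewrite ltnS leq_eqVlt; case: ltngtP.
have hb : ((b < T.+1)%N : nat) = ((b < T)%N + (b == T))%N.
  by rewrite ltnS leq_eqVlt; case: ltngtP.
rewrite ha hb.
have -> : (((a < T)%N + (a == T)) + ((b < T)%N + (b == T)))%N =
  (((a < T)%N + (b < T)%N) + ((a == T) + (b == T)))%N by lia.
rewrite natrD mulrDl -natr1 mulrDl mul1r.
suff : f T <= B + ((a == T) + (b == T))%N%:R * M.
  move: IH; set X := \sum_(i < T) f i; move=> IH hfT; lra.
case: (eqVneq a T) => [<-|haT].
  apply: (le_trans (hall a)); rewrite lerD2l /= -[X in X <= _]mul1r ler_wpM2r //.
  by rewrite ler1n.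
case: (eqVneq b T) => [<-|hbT].
  apply: (le_trans (hall b)); rewrite lerD2l /= addn1 -[X in X <= _]mul1r ler_wpM2r //.
by rewrite /= mul0r addr0; apply: hex; rewrite eq_sym.
Qed.

Local Open Scope classical_set_scope.

Lemma inv_cvg0 : (fun T : nat => (T%:R : R)^-1) @ \oo --> 0.
Proof. rewrite -(@cvg_shiftS _ (fun T : nat => (T%:R : R)^-1)) /=; exact: cvg_harmonic. Qed.

Definition Bv : R := n.+1%:R * (3/5).
Definition Mv : R := n.+1%:R * (4/5).

Lemma LTE_le Rs L : feas Rs -> is_LTE uI cI 1 n.+1 ebI Rs L -> L <= Bv.
Proof.
move=> hf hL.
have [t1 ht1] := exc hf.
have hn : (0 : R) <= n.+1%:R := ler0n R n.+1.
have hs T : \sum_(t < T) E Rs t <= T%:R * Bv + 2%:R * Mv.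
  apply: (le_trans (@sum_exc (fun t => E Rs t) Bv Mv 0%N t1 _ _ _ T)).
  - by rewrite /Mv; lra.
  - move=> t; apply: (le_trans (E_bound45 t hf)); rewrite /Bv /Mv; lra.
  - by move=> t h0 h1; apply: ht1.
  - rewrite lerD2l ler_wpM2r //; first by rewrite /Mv; lra.
    by rewrite ler_nat; case: (0 < T)%N; case: (t1 < T)%N.
have hg : (fun T : nat => Bv + (T%:R)^-1 * (2%:R * Mv)) @ \oo --> Bv.
  rewrite -[X in _ --> X](addr0 Bv).
  apply: cvgD; first exact: cvg_cst.
  rewrite -(mul0r (2%:R * Mv)).
  apply: cvgMr_tmp; exact: inv_cvg0.
apply: (ler_cvg_to hL hg).
near=> T.
have hT : (0 < T)%N by near: T; exists 1%N.
apply: (le_trans (ler_wpM2l _ (hs T))); first by rewrite invr_ge0.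
rewrite mulrDr mulrA mulVf ?mul1r //.
by rewrite pnatr_eq0 -lt0n.
Unshelve. all: by end_near.
Qed.

Lemma hz : (n.+1 < n.+1 + m)%N.
Proof. by rewrite -{1}(addn0 n.+1) ltn_add2l. Qed.

Definition zI : 'I_(n.+1 + m) := Ordinal hz.
Definition FLs : recseq n.+1 (n.+1 + m) := fun _ _ => [set zI]%SET.

Lemma eng_z i : eng uI cI i zI = 3/5.
Proof.
rewrite engE /= leqnn ifF //; apply/negbTE; rewrite neq_ltn.
by apply/orP; right; apply: (leq_trans (ltn_ord i)).
Qed.

Lemma fl_traj t : Us' FLs t = [set: 'I_n.+1]%SET /\ zI \in Cs' FLs t.
Proof.
elim: t => [|t [hU hC]]; first by rewrite /Us /Cs /= inE.
split.
  apply/finset.setP => i; rewrite Us_step hU !inE cards1 /=.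
  apply/forallP => j; apply/implyP; rewrite inE => /eqP ->.
  rewrite eng_z /ebI; lra.
rewrite Cs_step hC /=.
rewrite (_ : [set i in Us' FLs t | zI \in FLs t i]%SET = [set: 'I_n.+1]%SET).
  by rewrite cardsT card_ord.
by apply/finset.setP => i; rewrite hU /FLs !inE eqxx.
Qed.

Lemma fl_feas : feas FLs.
Proof.
move=> t i _; have [_ hC] := fl_traj t.
split; first by rewrite finset.sub1set.
rewrite cards1; apply/esym/minn_idPl; rewrite card_gt0; apply/finset.set0Pn; by exists zI.
Qed.

Lemma fl_E t : E FLs t = Bv.
Proof.
have [hU _] := fl_traj t.
rewrite /engagement hU.
have hi i : \sum_(j in FLs t i) eng uI cI i j = 3/5.
  by rewrite /FLs big_set1 eng_z.
rewrite (eq_bigr _ (fun i _ => hi i)).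
rewrite sumr_const cardsT card_ord /Bv; exact: esym (mulr_natl _ _).
Qed.

Lemma fl_LTE : is_LTE uI cI 1 n.+1 ebI FLs Bv.
Proof.
apply: (cvg_near_cst Bv); near=> T.
have hT : (0 < T)%N by near: T; exists 1%N.
under eq_bigr => t _ do rewrite fl_E.
rewrite sumr_const card_ord -(mulr_natl Bv T) mulrA mulVf ?mul1r //.
by rewrite pnatr_eq0 -lt0n.
Unshelve. all: by end_near.
Qed.

Lemma uc_R0 Rs : is_UC uI cI 1 n.+1 ebI Rs ->
  forall i j, j \in Rs 0%N i -> (j : nat) = i.
Proof.
move=> [hf hopt] i j hj.
have hi : i \in Us' Rs 0 by rewrite /Us /= inE.
have [hs hc] := hf 0%N i hi.
have hc1 : #|Rs 0%N i| == 1%N.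
  rewrite hc /Cs /= cardsT card_ord; apply/eqP/minn_idPl; by rewrite addSn.
have [j0 hj0] := cards1P hc1.
move: hj; rewrite hj0 inE => /eqP ->.
have hw : (i < n.+1 + m)%N by apply: (leq_trans (ltn_ord i)); rewrite leq_addr.
have := hopt 0%N i hi [set Ordinal hw]%SET.
rewrite finset.sub1set /Cs /= inE cards1 hj0 !big_set1 !engE /= eqxx => /(_ isT isT) hle.
case: (eqVneq (j0 : nat) i) => [//|hne]; exfalso.
by move: hle; rewrite (negbTE hne); case: ifP => _; lra.
Qed.

Arguments uc_R0 [Rs] huc [i j].

Lemma uc_C1 Rs : is_UC uI cI 1 n.+1 ebI Rs -> Cs' Rs 1 = finset.set0.
Proof.
move=> huc; apply/finset.setP => j; rewrite finset.in_set0; apply/negP => hj.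
have [_ h0] := creator_all hj ord0.
have [_ h1] := creator_all hj (Ordinal (n0 : (1 < n.+1)%N)).
have e0 := uc_R0 huc h0; have e1 := uc_R0 huc h1.
by rewrite e0 in e1.
Qed.

Lemma uc_LTE Rs : is_UC uI cI 1 n.+1 ebI Rs -> is_LTE uI cI 1 n.+1 ebI Rs 0.
Proof.
move=> huc; have hf := huc.1.
have hE t : (0 < t)%N -> E Rs t = 0.
  by move=> ht; apply: (E_empty hf); exact: (Cs_empty_after (uc_C1 _ huc) ht).
rewrite /is_LTE.
have -> : (fun T : nat => (T%:R)^-1 * \sum_(t < T) E Rs t) =
          (fun T : nat => (T%:R)^-1 * E Rs 0%N).
  apply: funext => -[|T]; first by rewrite big_ord0 invr0 !mul0r.
  by rewrite big_ord_recl big1 ?addr0 // => t _; apply: hE.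
rewrite -(mul0r (E Rs 0%N)); apply: cvgMr_tmp; exact: inv_cvg0.
Qed.

End Inst.

Theorem theorem3 (R : realType) (n m : nat) :
  (0 < n)%N -> (0 < m)%N ->
  exists (D U C : nat) (u : 'I_U -> 'I_D -> R) (c : 'I_C -> 'I_D -> R)
         (K abar : nat) (ebar : R),
    [/\ (n <= U)%N, (m <= C)%N, valid_instance u c K ebar &
      exists (FL : recseq U C) (Lfl : R),
        [/\ is_FL u c K abar ebar FL Lfl, 0 < Lfl &
          forall UC : recseq U C, is_UC u c K abar ebar UC ->
            exists Luc : R, is_LTE u c K abar ebar UC Luc /\ Luc / Lfl = 0]].
Proof.
move=> n0 m0.
exists n.+2, n.+1, (n.+1 + m)%N, (@uI R n), (@cI R n m), 1%N, n.+1, (@ebI R).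
split => //; first by rewrite leq_addl.
  exact: valid.
exists (@FLs n m m0), (@Bv R n); split.
- split; first exact: fl_feas.
    exact: fl_LTE.
  by move=> Rs L hf hL; exact: (LTE_le _ _ _ n0 m0 _ _ hf hL).
- rewrite /Bv mulr_gt0 //; lra.
- move=> Rs huc; exists 0; split; first by apply: uc_LTE huc.
  by rewrite mul0r.
Qed.
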